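(* Let $(S,\cdot)$ be a discrete semigroup, let $\mathcal{F}$ be a filter on $S$ such that $\overline{\mathcal{F}}$ is a subsemigroup of $\beta S$, let $(X,\langle T_s\rangle_{s\in S})$ be a dynamical system, let $L$ be a minimal left ideal of $\overline{\mathcal{F}}$, and let $x\in X$. The following are equivalent: (a) $x$ is an $\mathcal{F}$-uniformly recurrent point of $(X,\langle T_s\rangle_{s\in S})$; (b) there exists $u\in L$ such that $T_u(x)=x$; (c) there exist $y\in X$ and an idempotent $u\in L$ such that $T_u(y)=x$; (d) there exists an idempotent $u\in L$ such that $T_u(x)=x$.
   Context: $\beta S$ is the Stone–Čech compactification of $S$ (ultrafilters on $S$) with the extended operation making it a compact right topological semigroup ($A\in pq$ iff $\{x\in S:x^{-1}A\in q\}\in p$, where $x^{-1}A=\{y: xy\in A\}$). $\overline{\mathcal{F}}=\bigcap_{F\in\mathcal{F}}\overline{F}$ is the set of ultrafilters containing $\mathcal{F}$. A dynamical system $(X,\langle T_s\rangle_{s\in S})$: $X$ compact Hausdorff, each $T_s$ continuous, $T_s\circ T_t=T_{st}$. For $p\in\beta S$, $T_p(x)=p\text{-}\lim_{s\in S}T_s(x)$; one has $T_p\circ T_q=T_{pq}$. A set $A\subseteq S$ is $\mathcal{F}$-syndetic if for every $F\in\mathcal{F}$ there is a finite $G\subseteq F$ with $\bigcup_{t\in G}t^{-1}A\in\mathcal{F}$. A point $x$ is $\mathcal{F}$-uniformly recurrent if for every neighbourhood $U$ of $x$, $\{s\in S:T_s(x)\in U\}$ is $\mathcal{F}$-syndetic.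 *)

(* Defs.v *)
From HB Require Import structures.
From mathcomp Require Import all_boot all_order.
From mathcomp Require Import all_classical all_reals all_analysis.
Set Implicit Arguments. Unset Strict Implicit. Unset Printing Implicit Defensive.
Local Open Scope classical_set_scope.

(* Points of beta S are represented as sets of subsets of S (ultrafilters). *)
Section Defs.
Variable S : Type.
Variable op : S -> S -> S.

Definition linv (x : S) (A : set S) : set S := [set y | A (op x y)].

Definition is_filter (F : set (set S)) : Prop :=
  [/\ F setT, ~ F set0,
      (forall A B, F A -> F B -> F (A `&` B)) &
      (forall A B, A `<=` B -> F A -> F B)].

Definition is_ultrafilter (p : set (set S)) : Prop :=
  is_filter p /\ (forall A : set S, p A \/ p (~` A)).

Definition umul (p q : set (set S)) : set (set S) :=
  [set A | p [set x | q (linv x A)]].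

Definition Fbar (F : set (set S)) : set (set (set S)) :=
  [set p | is_ultrafilter p /\ F `<=` p].

Definition is_subsemigroup (M : set (set (set S))) : Prop :=
  forall p q, M p -> M q -> M (umul p q).

Definition is_left_ideal (M L : set (set (set S))) : Prop :=
  L !=set0 /\ L `<=` M /\ (forall p q, M p -> L q -> L (umul p q)).

Definition is_minimal_left_ideal (M L : set (set (set S))) : Prop :=
  is_left_ideal M L /\ (forall L', is_left_ideal M L' -> L' `<=` L -> L' = L).

Definition uidempotent (u : set (set S)) : Prop := umul u u = u.

Definition F_syndetic (F : set (set S)) (A : set S) : Prop :=
  forall B, F B -> exists G : set S,
    [/\ finite_set G, G `<=` B & F (\bigcup_(t in G) linv t A)].
End Defs.

Section Dyn.
Variables (S : Type) (op : S -> S -> S) (X : topologicalType).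

Definition dynamical_system (T : S -> X -> X) : Prop :=
  [/\ compact [set: X], hausdorff_space X,
      (forall s, continuous (T s)) &
      (forall s t, T s \o T t = T (op s t))].

(* "p-lim_{s in S} f s = y" : every neighbourhood of y has its preimage in p.
   In a Hausdorff space this limit, when it exists, is unique; thus
   T_p(x) = y is expressed as plim_is p (fun s => T s x) y. *)
Definition plim_is (p : set (set S)) (f : S -> X) (y : X) : Prop :=
  forall U, nbhs y U -> p (f @^-1` U).

Definition F_uniformly_recurrent (F : set (set S)) (T : S -> X -> X) (x : X) : Prop :=
  forall U, nbhs x U -> F_syndetic op F [set s | U (T s x)].
End Dyn.

(* Main.v *)
Require Import Defs.
From HB Require Import structures.
From mathcomp Require Import all_boot all_order.
From mathcomp Require Import all_classical all_reals all_analysis.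
From mathcomp Require Import finmap.
Local Open Scope classical_set_scope.


Section Ult.
Context {S : Type}.
Implicit Types p q r : set (set S).

Lemma uT {p} : is_ultrafilter p -> p setT.
Proof. by case=> -[]. Qed.
Lemma u0 {p} : is_ultrafilter p -> ~ p set0.
Proof. by case=> -[]. Qed.
Lemma uI {p A B} : is_ultrafilter p -> p A -> p B -> p (A `&` B).
Proof. by case=> -[_ _ h _] _; apply: h. Qed.
Lemma uS {p A B} : is_ultrafilter p -> A `<=` B -> p A -> p B.
Proof. by case=> -[_ _ _ h] _; apply: h. Qed.
Lemma uC {p} A : is_ultrafilter p -> p A \/ p (~` A).
Proof. by case=> _ h; apply: h. Qed.
Lemma uN {p A} : is_ultrafilter p -> p (~` A) -> ~ p A.
Proof.
move=> hp hc ha; apply: (u0 hp); apply: uS hp _ (uI hp ha hc).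
by move=> y [].
Qed.
Lemma uNN {p A} : is_ultrafilter p -> ~ p A -> p (~` A).
Proof. by move=> hp hn; case: (uC A hp). Qed.
Lemma uU {p A B} : is_ultrafilter p -> p (A `|` B) -> p A \/ p B.
Proof.
move=> hp hAB; case: (uC A hp) => [|hA]; first by left.
right; apply: uS hp _ (uI hp hAB hA) => y [[]//].
Qed.
Lemma uex {p A} : is_ultrafilter p -> p A -> A !=set0.
Proof.
move=> hp hA; apply: contrapT => hn; apply: (u0 hp); apply: uS hp _ hA.
by move=> y Ay; apply: hn; exists y.
Qed.
Lemma ult_sub_eq {p q} : is_ultrafilter p -> is_ultrafilter q -> p `<=` q -> p = q.
Proof.
move=> hp hq hpq; apply/seteqP; split => // A hA.
apply: contrapT => hn; exact: (uN hq (hpq _ (uNN hp hn)) hA).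
Qed.

Lemma ult_bigcup {p} {G : set S} {f : S -> set S} : is_ultrafilter p ->
  finite_set G -> p (\bigcup_(t in G) f t) -> exists t, G t /\ p (f t).
Proof.
move=> hp /(@finite_fsetP {classic S}) [X ->].
have : forall s : seq {classic S},
   p (\bigcup_(t in [set x | x \in s]) f t) -> exists t, (t \in s) /\ p (f t).
  elim => [|a s IH] h.
    exfalso; apply: (u0 hp); apply: uS hp _ h => y [t]; by rewrite /= in_nil.
  have : p (f a `|` \bigcup_(t in [set x | x \in s]) f t).
    apply: uS hp _ h => y [t] /=; rewrite in_cons => /orP [/eqP -> |ht] hy.
      by left.
    by right; exists t.
  case/(uU hp) => [ha|/IH [t [ht hft]]]; first by exists a; rewrite mem_head.
  by exists t; rewrite in_cons ht orbT.
move=> H h; have [t [ht hft]] := H X h; by exists t.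
Qed.

Lemma ultra_ext (D : set (set S)) : D !=set0 ->
  (forall A B, D A -> D B -> exists2 C, D C & C `<=` A `&` B) ->
  (forall A, D A -> A !=set0) ->
  exists q, is_ultrafilter q /\ D `<=` q.
Proof.
move=> [A0 hA0] hdir hne.
pose G := [set B | exists2 A, D A & A `<=` B].
have GF : Filter G.
  split.
  - by exists A0.
  - move=> A B [A1 h1 s1] [B1 h2 s2]; have [C hC sC] := hdir _ _ h1 h2.
    exists C => // y /sC [/s1 ? /s2 ?]; by split.
  - move=> P Q PQ [A hA sA]; exists A => //; exact: subset_trans PQ.
have GP : ProperFilter G.
  apply: Build_ProperFilter_ex => // P [A hA sA].
  by have [y Ay] := hne _ hA; exists y; apply: sA.
have [U [UU sGU]] := ultraFilterLemma GP.
have UF : Filter U by apply: filter_filter.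
exists U; split; last by move=> A hA; apply: sGU; exists A.
split.
  split.
  - exact: filterT.
  - exact: filter_not_empty.
  - move=> A B; exact: filterI.
  - move=> A B; exact: filterS.
move=> A; apply: contrapT => /not_orP [nA nC].
pose H := [set B | exists2 C, U C & C `&` A `<=` B].
have HF : Filter H.
  split.
  - by exists setT => //; exact: filterT.
  - move=> P Q [C1 h1 s1] [C2 h2 s2]; exists (C1 `&` C2); first exact: filterI.
    by move=> y [[c1 c2] a]; split; [apply: s1|apply: s2].
  - move=> P Q PQ [C hC sC]; exists C => //; exact: subset_trans PQ.
have HP : ProperFilter H.
  apply: Build_ProperFilter_ex => // P [C hC sC].
  apply: contrapT => hn; apply: nC; apply: filterS hC => y Cy Ay.
  by apply: hn; exists y; apply: sC.
have UH : U `<=` H by move=> B hB; exists B => // y [].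
have := @max_filter _ _ UU H HP UH => HU.
by apply: nA; rewrite -HU; exists setT; [exact: filterT| move=> y []].
Qed.

End Ult.

Section Mul.
Context {S : Type} (op : S -> S -> S).
Hypothesis assoc : forall a b c, op a (op b c) = op (op a b) c.
Implicit Types p q r : set (set S).
Local Notation ult := (@is_ultrafilter S).
Local Notation um := (umul op).

Definition Icap (K : set (set (set S))) : set (set S) := [set A | forall p, K p -> p A].
Definition uclosed (K : set (set (set S))) :=
  forall q, ult q -> Icap K `<=` q -> K q.

Lemma umul_ult {p q} : ult p -> ult q -> ult (um p q).
Proof.
move=> hp hq; split; first split.
- by apply: uS hp _ (uT hp) => x _; apply: uS hq _ (uT hq).
- move=> h; apply: (u0 hp); apply: uS hp _ h => x /= hx; apply: (u0 hq).
  by apply: uS hq _ hx => y.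
- move=> A B hA hB; apply: uS hp _ (uI hp hA hB) => x [/= h1 h2].
  exact: (uI hq h1 h2).
- move=> A B AB hA; apply: uS hp _ hA => x /= h; apply: uS hq _ h => y /=.
  exact: AB.
move=> A; case: (uC [set x | q (linv op x A)] hp) => h; [left|right] => //.
apply: uS hp _ h => x /= hx; apply: uS hq _ (uNN hq hx) => y //.
Qed.

Lemma linvM y z A : linv op z (linv op y A) = linv op (op y z) A.
Proof. by rewrite /linv; apply/seteqP; split => w /=; rewrite assoc. Qed.

Lemma umulA p q r : um (um p q) r = um p (um q r).
Proof.
rewrite /umul; apply/seteqP; split => A /=;
  (have -> : [set y | q (linv op y [set x | r (linv op x A)])] =
            [set y | q [set z | r (linv op z (linv op y A))]]
    by apply/seteqP; split => y /=; (have -> : linv op y [set x | r (linv op x A)] =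
       [set z | r (linv op z (linv op y A))] by apply/seteqP; split => z /=; rewrite linvM)) => //.
Qed.

Lemma closed_image K e : (forall p, K p -> ult p) -> uclosed K -> ult e ->
  uclosed [set q | exists2 r, K r & q = um r e].
Proof.
move=> Kult Kcl he q hq hI.
pose D := [set X | exists B A, [/\ Icap K B, q A & X = B `&` [set x | e (linv op x A)]]].
have [r [hr sDr]] : exists r, ult r /\ D `<=` r.
  apply: ultra_ext.
  - exists (setT `&` [set x | e (linv op x setT)]); exists setT, setT; split => //.
      by move=> p /Kult /uT.
    exact: uT hq.
  - move=> _ _ [B1 [A1 [h1 h1' ->]]] [B2 [A2 [h2 h2' ->]]].
    exists (B1 `&` B2 `&` [set x | e (linv op x (A1 `&` A2))]).
      exists (B1 `&` B2), (A1 `&` A2); split => //.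
        by move=> p Kp; apply: uI (Kult _ Kp) (h1 _ Kp) (h2 _ Kp).
      exact: uI hq h1' h2'.
    move=> x [[b1 b2] /= hx]; split; split => //=.
      by apply: uS he _ hx => y [].
    by apply: uS he _ hx => y [].
  - move=> _ [B [A [hB hA ->]]]; apply: contrapT => hn.
    have : Icap [set q | exists2 r, K r & q = um r e] (~` A).
      move=> _ [p Kp ->]; rewrite /umul; apply: uS (Kult _ Kp) _ (hB _ Kp) => x Bx /=.
      have nx : ~ e (linv op x A) by move=> ex; apply: hn; exists x.
      by apply: uS he _ (uNN he nx) => y.
    by move=> h; exact: (uN hq (hI _ h) hA).
have Kr : K r.
  apply: (Kcl) => // B hB.
  have : D (B `&` [set x | e (linv op x setT)]).
    by exists B, setT; split => //; exact: uT hq.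
  by move/sDr => hh; apply: uS hr _ hh => y [].
exists r => //; apply: ult_sub_eq hq (umul_ult hr he) _ => A hA.
have : D (setT `&` [set x | e (linv op x A)]).
  by exists setT, A; split => // p /Kult /uT.
by move/sDr => hh; apply: uS hr _ hh => y [].
Qed.

Lemma closed_fix K e : ult e -> (forall v, K v -> ult v /\ um v e = e) ->
  forall q, ult q -> Icap K `<=` q -> um q e = e.
Proof.
move=> he hK q hq hI; symmetry; apply: ult_sub_eq he (umul_ult hq he) _ => A hA.
apply: contrapT => hn.
have h1 : q (~` [set x | e (linv op x A)]) by exact: (uNN hq hn).
have h2 : Icap K [set x | e (linv op x A)].
  by move=> v /hK [_ hv]; rewrite -hv in hA.
exact: (uN hq h1 (hI _ h2)).
Qed.

Lemma Icap_mono {K1 K2 : set (set (set S))} : K1 `<=` K2 -> Icap K2 `<=` Icap K1.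
Proof. by move=> s X h p /s; apply: h. Qed.

Lemma IcapI {K : set (set (set S))} {X Y} : (forall p, K p -> ult p) ->
  Icap K X -> Icap K Y -> Icap K (X `&` Y).
Proof. by move=> Ku hX hY p Kp; apply: uI (Ku _ Kp) (hX _ Kp) (hY _ Kp). Qed.

Definition adm (K K' : set (set (set S))) :=
  [/\ K' `<=` K, K' !=set0, uclosed K' & forall p q, K' p -> K' q -> K' (um p q)].

Lemma ellis K : (forall p, K p -> ult p) -> uclosed K -> K !=set0 ->
  (forall p q, K p -> K q -> K (um p q)) -> exists e, K e /\ um e e = e.
Proof.
move=> Kult Kcl [p0 Kp0] Ksemi.
pose T' := {K' | adm K K'}.
have a0 : adm K K by split => //; exists p0.
pose R := fun a b : T' => `[< proj1_sig b `<=` proj1_sig a >].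
have [M Mmax] : exists M : T', premaximal R M.
  apply: (ZL_preorder (exist _ K a0)).
  - by move=> t; apply/asboolP.
  - move=> a b c /asboolP h1 /asboolP h2; apply/asboolP; exact: subset_trans h2 h1.
  - move=> A Atot.
    pose B := [set p | K p /\ forall a, A a -> proj1_sig a p].
    have aB : adm K B.
      split.
      - by move=> p [].
      - pose D := [set X | Icap K X \/ exists2 a, A a & Icap (proj1_sig a) X].
        have [q [hq sDq]] : exists q, ult q /\ D `<=` q.
          apply: ultra_ext.
          + by exists setT; left => p /Kult /uT.
          + have sub : forall a : T', Icap K `<=` Icap (proj1_sig a).
              by move=> a; apply: Icap_mono; have [] := proj2_sig a.
            have ult_a : forall a : T', forall p, proj1_sig a p -> ult p.
              by move=> a p hp; apply: Kult; have [s _ _ _] := proj2_sig a; apply: s.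
            move=> X Y [hX|[a Aa hX]] [hY|[b Ab hY]].
            * by exists (X `&` Y) => //; left; apply: IcapI.
            * by exists (X `&` Y) => //; right; exists b => //; apply: IcapI (ult_a b) (sub b _ hX) hY.
            * by exists (X `&` Y) => //; right; exists a => //; apply: IcapI (ult_a a) hX (sub a _ hY).
            * have [/asboolP hab|/asboolP hba] := Atot _ _ Aa Ab.
                exists (X `&` Y) => //; right; exists b => //.
                by apply: IcapI (ult_a b) (Icap_mono hab _ hX) hY.
              exists (X `&` Y) => //; right; exists a => //.
              by apply: IcapI (ult_a a) hX (Icap_mono hba _ hY).
          + move=> X [hX|[a Aa hX]]; first exact: (@uex _ p0 X (Kult _ Kp0) (hX _ Kp0)).
            have [s [p ap] _ _] := proj2_sig a.
            exact: uex (Kult _ (s _ ap)) (hX _ ap).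
        exists q; split.
          by apply: (Kcl) => // X hX; apply: sDq; left.
        move=> a Aa; have [_ _ c _] := proj2_sig a; apply: c => // X hX.
        by apply: sDq; right; exists a.
      - move=> q hq hI; split.
          by apply: (Kcl) => //; apply: subset_trans hI; apply: Icap_mono => p [].
        move=> a Aa; have [_ _ c _] := proj2_sig a; apply: c => //.
        by apply: subset_trans hI; apply: Icap_mono => p [_ h]; apply: h.
      - move=> p q [Kp hp] [Kq hq]; split; first exact: Ksemi.
        move=> a Aa; have [_ _ _ m] := proj2_sig a; exact: m (hp _ Aa) (hq _ Aa).
    exists (exist _ B aB) => a Aa; apply/asboolP => p [_ h]; exact: h _ Aa.
have [M1 aM Mmin] : exists2 M1, adm K M1 & forall K', adm K K' -> K' `<=` M1 -> M1 `<=` K'.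
  exists (proj1_sig M); first exact: proj2_sig M.
  move=> K' aK' sub; have := Mmax (exist _ K' aK'); rewrite /R /= => h.
  by apply/asboolP; apply: h; apply/asboolP.
clear M Mmax; rename M1 into M.
have [MK [e Me] Mcl Msemi] := aM.
have Mult : forall p, M p -> ult p by move=> p /MK /Kult.
have he := Mult _ Me.
pose K1 := [set q | exists2 r, M r & q = um r e].
have aK1 : adm K K1.
  split.
  - by move=> _ [r Mr ->]; apply: (MK); apply: (Msemi).
  - by exists (um e e); exists e.
  - exact: closed_image Mult Mcl he.
  - move=> _ _ [r1 M1 ->] [r2 M2 ->]; exists (um (um r1 e) r2).
      exact: (Msemi _ _ (Msemi _ _ M1 Me) M2).
    by rewrite [RHS]umulA.
have sub1 : K1 `<=` M by move=> _ [r Mr ->]; exact: Msemi.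
have [r Mr er] : K1 e := Mmin K1 aK1 sub1 e Me.
pose K2 := [set v | M v /\ um v e = e].
have aK2 : adm K K2.
  split.
  - by move=> v [/MK].
  - by exists r; split => //; rewrite -er.
  - move=> q hq hI; split.
      by apply: (Mcl) => //; apply: subset_trans hI; apply: Icap_mono => p [].
    apply: closed_fix hq hI => //.
    by move=> v [Mv h]; split => //; apply: Mult.
  - move=> v1 v2 [M1 h1] [M2 h2]; split; first exact: Msemi.
    by rewrite umulA h2 h1.
have sub2 : K2 `<=` M by move=> v [].
have [_ ee] : K2 e := Mmin K2 aK2 sub2 e Me.
by exists e; split => //; apply: (MK).
Qed.

End Mul.


Section Dyn.
Context {S : Type} (op : S -> S -> S) {X : topologicalType} (T : S -> X -> X).

Lemma plim_ex (p : set (set S)) (f : S -> X) : is_ultrafilter p ->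
  compact [set: X] -> exists y, plim_is p f y.
Proof.
move=> hp hc.
pose G := [set U : set X | p (f @^-1` U)].
have GF : Filter G.
  split.
  - by apply: uS hp _ (uT hp).
  - move=> A B hA hB; apply: uS hp _ (uI hp hA hB) => s [h1 h2]; by split.
  - by move=> A B AB hA; apply: uS hp _ hA => s; apply: AB.
have GP : ProperFilter G.
  apply: (@Build_ProperFilter_ex _ G _ GF) => U hU; have [s hs] := uex hp hU; by exists (f s).
have [y [_ hy]] := hc G GP filterT.
exists y => U hU; apply: contrapT => hn.
have hc' : G (~` U) by exact: (uNN hp hn).
have [z [z1 z2]] := hy _ _ hc' hU.
exact: z1 z2.
Qed.

Lemma plim_uniq {p : set (set S)} {f : S -> X} {y1 y2} : is_ultrafilter p ->
  hausdorff_space X -> plim_is p f y1 -> plim_is p f y2 -> y1 = y2.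
Proof.
move=> hp hH h1 h2; apply: hH => A B hA hB.
have [s [sA sB]] := uex hp (uI hp (h1 _ hA) (h2 _ hB)).
by exists (f s).
Qed.

Hypothesis hlaw : forall s t, T s \o T t = T (op s t).

Lemma plim_step {p : set (set S)} {x z t U} : is_ultrafilter p ->
  continuous (T t) -> plim_is p (fun s => T s x) z -> nbhs (T t z) U ->
  p [set s | U (T (op t s) x)].
Proof.
move=> hp hc hz hU.
have h1 : nbhs z (T t @^-1` U) := hc z U hU.
apply: uS hp _ (hz _ h1) => s /= h.
by rewrite -hlaw.
Qed.

Lemma plim_comp {p q : set (set S)} {x z w} : is_ultrafilter p -> is_ultrafilter q ->
  (forall t, continuous (T t)) ->
  plim_is q (fun s => T s x) z -> plim_is p (fun t => T t z) w ->
  plim_is (umul op p q) (fun s => T s x) w.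
Proof.
move=> hp hq hc hz hw U hU.
have h := hw _ (nbhs_interior hU).
rewrite /umul; apply: uS hp _ h => t /= ht.
exact: (plim_step hq (hc t) hz ht).
Qed.

End Dyn.

Theorem theorem11 (S : Type) (op : S -> S -> S)
  (op_assoc : forall a b c, op a (op b c) = op (op a b) c)
  (F : set (set S)) (hF : is_filter F)
  (hFsemi : is_subsemigroup op (Fbar F))
  (X : topologicalType) (T : S -> X -> X) (hT : dynamical_system op T)
  (L : set (set (set S))) (hL : is_minimal_left_ideal op (Fbar F) L)
  (x : X) :
  [/\ (F_uniformly_recurrent op F T x <->
        exists u, L u /\ plim_is u (fun s => T s x) x),
      ((exists u, L u /\ plim_is u (fun s => T s x) x) <->
        exists (y : X) u, [/\ L u, uidempotent op u & plim_is u (fun s => T s y) x]) &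
      ((exists (y : X) u, [/\ L u, uidempotent op u & plim_is u (fun s => T s y) x]) <->
        exists u, [/\ L u, uidempotent op u & plim_is u (fun s => T s x) x])].
Proof.
have [FT F0 FI FS] := hF.
have [hcmp hH hc hlaw] := hT.
have [[Lne [Lsub Lmul]] Lmin] := hL.
have Fult : forall p, Fbar F p -> is_ultrafilter p by move=> p [].
have Lult : forall p, L p -> is_ultrafilter p by move=> p /Lsub /Fult.
have FsubL : forall p, L p -> F `<=` p by move=> p /Lsub [].
have Lminsub : forall L', is_left_ideal op (Fbar F) L' -> L' `<=` L -> L `<=` L'.
  by move=> L' hL' s; rewrite (Lmin L' hL' s).
have gen : forall q, L q -> L `<=` [set v | exists2 r, Fbar F r & v = umul op r q].
  move=> q Lq; apply: Lminsub; last by move=> _ [r hr ->]; apply: Lmul.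
  split; first by exists (umul op q q); exists q => //; exact: Lsub.
  split.
  - by move=> _ [r hr ->]; apply: hFsemi hr (Lsub _ Lq).
  - move=> p _ hp [r hr ->]; exists (umul op p r); first exact: hFsemi.
    by rewrite (umulA op op_assoc).
have gen2 : forall q, L q -> L `<=` [set v | exists2 r, L r & v = umul op r q].
  move=> q Lq; apply: Lminsub; last by move=> _ [r hr ->]; apply: Lmul => //; apply: Lsub.
  split; first by exists (umul op q q); exists q.
  split.
  - by move=> _ [r hr ->]; apply: hFsemi (Lsub _ hr) (Lsub _ Lq).
  - move=> p _ hp [r hr ->]; exists (umul op p r); first exact: Lmul.
    by rewrite (umulA op op_assoc).
have Fcl : uclosed (Fbar F).
  move=> q hq hI; split => // A hA; apply: hI => p [_ hp]; exact: hp.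
have cd : (exists (y : X) u, [/\ L u, uidempotent op u & plim_is u (fun s => T s y) x]) ->
        exists u, [/\ L u, uidempotent op u & plim_is u (fun s => T s x) x].
  move=> [y [u [Lu iu hyx]]]; have hu := Lult _ Lu.
  have [w hw] := plim_ex u (fun s => T s x) hu hcmp.
  have h := plim_comp op T hlaw hu hu hc hyx hw.
  rewrite iu in h.
  have wx : w = x := plim_uniq hu hH h hyx.
  by rewrite wx in hw; exists u.
have bd : (exists u, L u /\ plim_is u (fun s => T s x) x) ->
        exists u, [/\ L u, uidempotent op u & plim_is u (fun s => T s x) x].
  move=> [u [Lu hux]]; have hu := Lult _ Lu.
  pose K := [set v | L v /\ umul op v u = u].
  have [e [[Le eu] ee]] : exists e, K e /\ umul op e e = e.
    apply: (ellis op op_assoc).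
    - by move=> v [/Lult].
    - move=> q hq hI; split.
        have hcl := closed_image op (Fbar F) u Fult Fcl hu.
        have [r hr ->] := hcl q hq (subset_trans (Icap_mono (fun v => fun '(conj Lv _) => gen u Lu v Lv)) hI).
        exact: Lmul.
      apply: (closed_fix op K u hu) => //.
      by move=> v [Lv h]; split => //; apply: Lult.
    - have [v Lv uv] := gen2 u Lu u Lu; by exists v; split.
    - move=> v1 v2 [L1 h1] [L2 h2]; split; first exact: (Lmul _ _ (Lsub _ L1) L2).
      by rewrite (umulA op op_assoc) h2 h1.
  have he := Lult _ Le.
  have [w hw] := plim_ex e (fun s => T s x) he hcmp.
  have h := plim_comp op T hlaw he hu hc hux hw.
  rewrite eu in h.
  have wx : w = x := plim_uniq hu hH h hux.
  by rewrite wx in hw; exists e.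
have ab : F_uniformly_recurrent op F T x -> exists u, L u /\ plim_is u (fun s => T s x) x.
  move=> ur; have [p Lp] := Lne; have hp := Lult _ Lp.
  pose D := [set Y | exists C U, [/\ F C, nbhs x U &
               Y = C `&` [set t | p (linv op t [set s | U (T s x)])]]].
  have [r [hr sDr]] : exists r, is_ultrafilter r /\ D `<=` r.
    apply: ultra_ext.
    - exists (setT `&` [set t | p (linv op t [set s | setT (T s x)])]).
      by exists setT, setT; split => //; exact: filterT.
    - move=> _ _ [C1 [U1 [h1 n1 ->]]] [C2 [U2 [h2 n2 ->]]].
      exists (C1 `&` C2 `&` [set t | p (linv op t [set s | (U1 `&` U2) (T s x)])]).
        exists (C1 `&` C2), (U1 `&` U2); split => //; [exact: FI | exact: filterI].
      move=> t [[c1 c2] /= h]; split; split => //=.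
        by apply: uS hp _ h => s [].
      by apply: uS hp _ h => s [].
    - move=> _ [C [U [hC hU ->]]].
      have [G [Gfin GC hG]] := ur U hU C hC.
      have [t [Gt ht]] := ult_bigcup hp Gfin (FsubL p Lp _ hG).
      by exists t; split => //; apply: GC.
  have Fr : Fbar F r.
    split => // C hC.
    have h : D (C `&` [set t | p (linv op t [set s | setT (T s x)])]).
      by exists C, setT; split => //; exact: filterT.
    by apply: uS hr _ (sDr _ h) => t [].
  exists (umul op r p); split; first exact: Lmul.
  move=> U hU.
  have h : D (setT `&` [set t | p (linv op t [set s | U (T s x)])]).
    by exists setT, U; split.
  by apply: uS hr _ (sDr _ h) => t [].
have ba : (exists u, L u /\ plim_is u (fun s => T s x) x) -> F_uniformly_recurrent op F T x.
  move=> [u [Lu hux]] U hU B hB; have hu := Lult _ Lu.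
  apply: contrapT => nG.
  pose A := [set s | U (T s x)].
  pose D := [set Y | exists Cc G, [/\ F Cc, finite_set G, G `<=` B &
               Y = Cc `&` ~` (\bigcup_(t in G) linv op t A)]].
  have [p [hp sDp]] : exists p, is_ultrafilter p /\ D `<=` p.
    apply: ultra_ext.
    - exists (setT `&` ~` (\bigcup_(t in set0) linv op t A)).
      by exists setT, set0; split => //; exact: finite_set0.
    - move=> _ _ [C1 [G1 [h1 f1 s1 ->]]] [C2 [G2 [h2 f2 s2 ->]]].
      exists (C1 `&` C2 `&` ~` (\bigcup_(t in G1 `|` G2) linv op t A)).
        exists (C1 `&` C2), (G1 `|` G2); split => //.
        + exact: FI.
        + by rewrite finite_setU.
        + by move=> t [/s1|/s2].
      move=> y [[c1 c2] hn]; split; split => // -[t Gt ht]; apply: hn; exists t => //.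
        by left.
      by right.
    - move=> _ [Cc [G [hC hG sG ->]]]; apply: contrapT => hn; apply: nG.
      exists G; split => //; apply: FS hC => y Cy.
      by apply: contrapT => hy; apply: hn; exists y; split.
  have Fp : Fbar F p.
    split => // C hC.
    have h : D (C `&` ~` (\bigcup_(t in set0) linv op t A)).
      by exists C, set0; split => //; exact: finite_set0.
    by apply: uS hp _ (sDp _ h) => t [].
  have key : forall t, B t -> p (~` linv op t A).
    move=> t Bt.
    have h : D (setT `&` ~` (\bigcup_(t' in [set t]) linv op t' A)).
      by exists setT, [set t]; split => //; move=> s ->.
    apply: uS hp _ (sDp _ h) => y [_ hn] hy; apply: hn; by exists t.
  have Lpu : L (umul op p u) := Lmul _ _ Fp Lu.
  have [r Fr ur] := gen _ Lpu u Lu.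
  have hr := Fult _ Fr.
  have [z hz] := plim_ex p (fun s => T s x) hp hcmp.
  have h1 := plim_comp op T hlaw hp hu hc hux hz.
  have [w hw] := plim_ex r (fun t => T t z) hr hcmp.
  have h2 := plim_comp op T hlaw hr (umul_ult op hp hu) hc h1 hw.
  rewrite -ur in h2.
  have wx : w = x := plim_uniq hu hH h2 hux.
  rewrite wx in hw.
  have hrB : r B by case: Fr => _; apply.
  have hrU := hw _ (nbhs_interior hU).
  have [t [Bt ht]] := uex hr (uI hr hrB hrU).
  have := plim_step op T hlaw hp (hc t) hz ht.
  exact: (uN hp (key t Bt)).
split.
- by split.
- split; first by move=> /bd [u [Lu iu hu]]; exists x, u; split.
  by move=> /cd [u [Lu iu hu]]; exists u.
- split => //.
  by move=> [u [Lu iu hu]]; exists x, u; split.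
Qed.
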